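(* The function $U(n)=\sum_{j=1}^n\frac{1}{j^2}$ of the positive integer variable $n$ is a transcendental function in $n$ over $\overline{\mathbb{Q}}$.
   Context: $\overline{\mathbb{Q}}\subseteq\mathbb{C}$ denotes the field of algebraic numbers. A function $f(n)$ of the positive integer variable $n$ is an algebraic function over a subfield $K\subseteq\mathbb{C}$ if there exist polynomials $q_0,\dots,q_k\in K[n]$ with $q_k\neq 0$ such that $q_k(n)f(n)^k+\cdots+q_1(n)f(n)+q_0(n)=0$ for all positive integers $n$; otherwise $f$ is a transcendental function over $K$. *)

(* Defs.v *)
(* Qbar (the field of algebraic numbers inside C) is modelled
   by mathcomp's [algC], the algebraic closure of Q with conjugation. *)
From HB Require Import structures.
From mathcomp Require Import all_boot all_order all_algebra all_field.
Set Implicit Arguments. Unset Strict Implicit. Unset Printing Implicit Defensive.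
Import Order.TTheory GRing.Theory Num.Theory.
Local Open Scope ring_scope.

(* f : positive integers -> algC (values at n = 0 are irrelevant).
   f is algebraic over Qbar iff there are k and polynomials q_0..q_k in Qbar[n]
   with q_k <> 0 and  sum_{i<=k} q_i(n) f(n)^i = 0  for all positive integers n. *)
Definition algebraic_fun (f : nat -> algC) : Prop :=
  exists (k : nat) (q : nat -> {poly algC}),
    q k != 0 /\
    forall n : nat, (0 < n)%N ->
      \sum_(i < k.+1) (q i).[n%:R] * f n ^+ i = 0.

Definition transcendental_fun (f : nat -> algC) : Prop := ~ algebraic_fun f.

Definition U (n : nat) : algC := \sum_(1 <= j < n.+1) (j%:R ^+ 2)^-1.

(* Main.v *)
From mathcomp Require Import all_boot all_order all_algebra all_field.
From mathcomp Require Import ring zify.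
Require Import Defs.
From Stdlib Require Import Classical.
Import Order.TTheory GRing.Theory Num.Theory.
Local Open Scope ring_scope.

Lemma roots_bound (p : {poly algC}) : p != 0 ->
  exists b, forall m, (b <= m)%N -> p.[m%:R] != 0.
Proof.
move: {2}(size p) (leqnn (size p)) => s; elim: s p => [|s IH] p hs p0.
  by move: p0; rewrite -size_poly_eq0; move: hs; rewrite leqn0 => ->.
case: (classic (exists m : nat, root p m%:R)) => [[m rm]|nr]; last first.
  exists 0%N => m _; apply/negP => /rootP h; apply: nr; exists m; exact/rootP.
case/factor_theorem: rm => q pq.
have q0 : q != 0 by apply: contraNneq p0 => q0; rewrite pq q0 mul0r.
have : (size q <= s)%N.
  move: hs; rewrite pq size_mul // ?polyXsubC_eq0 // size_XsubC addn2 /=.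
  by [].
case/(IH _)/(_ q0) => b hb.
exists (maxn b m.+1) => n; rewrite geq_max => /andP[bn mn].
rewrite pq hornerM mulf_neq0 ?hb // !hornerE subr_eq0.
by rewrite eqr_nat; apply: contraTneq mn => ->; rewrite ltnn.
Qed.

Lemma vanish_poly (p : {poly algC}) b :
  (forall m, (b <= m)%N -> p.[m%:R] = 0) -> p = 0.
Proof.
move=> h; apply/eqP; apply/negPn/negP => /roots_bound [c hc].
by move: (hc (maxn b c) (leq_maxr _ _)); rewrite h ?leq_maxl ?eqxx.
Qed.

Lemma alg_step (Q0 Q1 P0 P1 z c : algC) : Q0 != 0 -> Q1 != 0 -> z != 0 ->
  Q1 * z^+2 * P0 = Q0 * (z^+2 * P1 + c * Q1) -> P0 / Q0 - P1 / Q1 = c / z ^+ 2.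
Proof.
move=> q0 q1 z0 h.
have e : P0 = Q0 * (z^+2 * P1 + c * Q1) / (Q1 * z^+2).
  by rewrite -h; field; rewrite q1 z0.
by rewrite e; field; rewrite q0 q1 z0.
Qed.

Lemma step_tel (P Q : {poly algC}) (k : nat) n0 :
  (forall m, (n0 <= m)%N -> Q.[m%:R] != 0) -> (0 < n0)%N ->
  (forall y : nat, (0 < y)%N -> Q.[y%:R+1] * (y%:R+1)^+2 * P.[y%:R] =
      Q.[y%:R] * ((y%:R+1)^+2 * P.[y%:R+1] + k%:R * Q.[y%:R+1])) ->
  forall n, (n0 <= n)%N -> forall M,
   P.[n%:R] / Q.[n%:R] - P.[(n+M)%N%:R] / Q.[(n+M)%N%:R] =
   k%:R * \sum_(j < M) ((n + j.+1)%N%:R ^+ 2)^-1.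
Proof.
move=> hQ n0p hyp n hn; elim=> [|M IH].
  by rewrite big_ord0 addn0 subrr mulr0.
rewrite big_ord_recr /= mulrDr -IH.
have hy : (n0 <= n + M)%N by apply: leq_trans hn (leq_addr _ _).
have q0 := hQ _ hy.
have q1 : Q.[(n+M)%N%:R + 1] != 0.
  by rewrite natr1; apply: hQ; apply: leq_trans hy (leqnSn _).
have a0 : ((n+M)%N%:R + 1 : algC) != 0 by rewrite natr1 pnatr_eq0.
have h := alg_step _ _ _ _ _ _ q0 q1 a0 (hyp (n+M)%N (leq_trans n0p hy)).
rewrite addnS -natr1 -h; ring.
Qed.

Lemma tele_contra (P Q : {poly algC}) (k : nat) : Q != 0 -> k != 0%N ->
  (forall y : nat, (0 < y)%N -> Q.[y%:R+1] * (y%:R+1)^+2 * P.[y%:R] =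
      Q.[y%:R] * ((y%:R+1)^+2 * P.[y%:R+1] + k%:R * Q.[y%:R+1])) -> False.
Proof.
move=> Q0 k0 hyp.
have [b1 hb1] := roots_bound _ Q0.
set Qm := Q \Po (- 'X).
have hQm : forall x, Qm.[x] = Q.[- x].
  by move=> x; rewrite /Qm horner_comp hornerN hornerX.
have Qm0 : Qm != 0.
  apply/negP => /eqP e; move: (hb1 b1 (leqnn _)).
  by rewrite -[b1%:R]opprK -hQm e horner0 eqxx.
have [b2 hb2] := roots_bound _ Qm0.
set j0 := (maxn b1 b2).+1.
set N := (j0 + j0)%N.
have hQ : forall m, (b1.+1 <= m)%N -> Q.[m%:R] != 0.
  by move=> m hm; apply: hb1; apply: ltnW.
have tel := step_tel _ _ _ _ hQ (ltn0Sn _) hyp.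
pose sh (p : {poly algC}) := p \Po ('X + (N%:R)%:P).
pose W : {poly algC} := \prod_(j < N) ('X + (j.+1)%:R%:P)^+2.
pose V : {poly algC} := \sum_(j < N) \prod_(i < N | i != j) ('X + (i.+1)%:R%:P)^+2.
pose E : {poly algC} := (P * sh Q - sh P * Q) * W - (k%:R)%:P * Q * sh Q * V.
have hE : forall x, E.[x] = (P.[x] * Q.[x + N%:R] - P.[x+N%:R]*Q.[x])
   * \prod_(j<N) (x + (j.+1)%:R)^+2
   - k%:R * Q.[x] * Q.[x+N%:R] * \sum_(j < N) \prod_(i < N | i != j) (x+(i.+1)%:R)^+2.
  move=> x; rewrite /E /sh /W /V !(hornerE, horner_comp, horner_prod, horner_sum).
  congr (_ * _ - _ * _). all: try (rewrite ?horner_prod ?horner_sum).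
    by apply: eq_bigr => j _; rewrite !hornerE.
  by apply: eq_bigr => j _; rewrite horner_prod; apply: eq_bigr => i _; rewrite !hornerE.
have E0 : E = 0.
  apply: (@vanish_poly _ b1.+1) => m hm.
  rewrite hE -natrD.
  set f := fun j : 'I_N => ((m + j.+1)%N%:R : algC) ^+ 2.
  have fE : forall j : 'I_N, (m%:R + (j.+1)%:R) ^+ 2 = f j by move=> j; rewrite /f natrD.
  rewrite (eq_bigr f); last by move=> j _; rewrite fE.
  rewrite [\sum_(j < N) _](eq_bigr (fun j : 'I_N => \prod_(i < N | i != j) f i)); last first.
    by move=> j _; apply: eq_bigr => i _; rewrite fE.
  have f0 : forall j, f j != 0 by move=> j; rewrite /f expf_neq0 // pnatr_eq0 addnS.
  have hV : forall j, \prod_(i < N | i != j) f i = (\prod_(i < N) f i) / f j.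
    by move=> j; rewrite [in RHS](bigD1 j) //= [f j * _]mulrC mulfK.
  rewrite [\sum_(j < N) _](eq_bigr (fun j : 'I_N => (\prod_(i < N) f i) / f j)); last by move=> j _; rewrite hV.
  rewrite -mulr_sumr.
  have := tel m hm N.
  have q0 := hQ m hm.
  have q1 : Q.[(m + N)%N%:R] != 0 by apply: hQ; apply: leq_trans hm (leq_addr _ _).
  move=> t.
  have key : P.[m%:R] * Q.[(m + N)%N%:R] - P.[(m + N)%N%:R] * Q.[m%:R]
     = Q.[m%:R] * Q.[(m + N)%N%:R] * (k%:R * \sum_(j < N) ((m + j.+1)%N%:R ^+ 2)^-1).
    by rewrite -t; field; rewrite q0 q1.
  rewrite key; rewrite /f; ring.
pose x := - (j0%:R : algC).
have := hE x; rewrite E0 horner0.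
have xN : x + N%:R = j0%:R by rewrite /x /N natrD addKr.
rewrite xN.
have jlt : (j0.-1 < N)%N by rewrite /N /j0; lia.
pose jj := Ordinal jlt.
have fjj : x + (jj.+1)%:R = 0 by rewrite /x /= addNr.
rewrite (bigD1 jj) //= fjj expr0n /= mul0r mulr0 sub0r.
rewrite (bigD1 jj) //= [X in _ + X]big1 ?addr0; last first.
  move=> j hj; rewrite (bigD1 jj); last by rewrite eq_sym.
  by rewrite fjj expr0n /= mul0r.
move/eqP; rewrite eq_sym oppr_eq0; apply/negP.
rewrite !mulf_neq0 //.
- by rewrite pnatr_eq0.
- by rewrite /x -hQm hb2 // /j0; lia.
- by rewrite hb1 // /j0; lia.
apply/prodf_neq0 => i hi; rewrite expf_neq0 // /x addrC subr_eq0 eqr_nat.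
apply: contra hi => /eqP e; apply/eqP; apply: val_inj => /=.
by rewrite /j0 in e *; lia.
Qed.

Lemma coef_pow (a : {poly algC}) i j :
  ((a%:P * 'X + 1) ^+ i)`_j = a ^+ j *+ 'C(i, j).
Proof.
rewrite exprD1n coef_sum.
rewrite (eq_bigr (fun l : 'I_i.+1 => (a ^+ l * (j == l)%:R) *+ 'C(i, l))); last first.
  move=> l _; rewrite coefMn exprMn -rmorphXn coefCM coefXn //.
case: (leqP j i) => hj.
  rewrite (bigD1 (Ordinal (hj : (j < i.+1)%N))) //= eqxx mulr1 big1 ?addr0 //.
  move=> l hl; rewrite eq_sym; case: eqP => [e|]; last by rewrite mulr0 mul0rn.
  by move: hl; rewrite -val_eqE /= e eqxx.
rewrite bin_small // big1 // => l _.
have : (l < j)%N by apply: leq_trans (ltn_ord l) hj.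
by rewrite ltn_neqAle eq_sym => /andP[/negbTE -> _]; rewrite mulr0 mul0rn.
Qed.

Definition ev (n : nat) (F : {poly {poly algC}}) : algC :=
  (map_poly (horner_eval (n%:R : algC)) F).[Defs.U n].

Lemma ev_expand n (F : {poly {poly algC}}) s : (size F <= s)%N ->
  ev n F = \sum_(i < s) (F`_i).[n%:R] * U n ^+ i.
Proof.
move=> hs; rewrite /ev (@horner_coef_wide _ s); last first.
  apply/leq_sizeP => j hj; rewrite coef_map /= horner_evalE nth_default ?horner0 //.
  exact: leq_trans hs hj.
by apply: eq_bigr => i _; rewrite coef_map /= horner_evalE.
Qed.

Lemma ev_CM n (p : {poly algC}) (F : {poly {poly algC}}) : ev n (p%:P * F) = p.[n%:R] * ev n F.
Proof. by rewrite /ev rmorphM /= map_polyC hornerCM. Qed.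

Lemma ev_B n (F G : {poly {poly algC}}) : ev n (F - G) = ev n F - ev n G.
Proof. by rewrite /ev rmorphB hornerD hornerN. Qed.

Lemma U_S n : U n.+1 = U n + ((n.+1)%:R ^+ 2)^-1.
Proof. by rewrite /U big_nat_recr. Qed.

Lemma evt (x y : algC) (c b : {poly algC}) i :
  (map_poly (horner_eval x) (c%:P * (b%:P * 'X + 1)^+i)).[y]
  = c.[x] * (b.[x] * y + 1) ^+ i.
Proof.
rewrite !(rmorphM, rmorphXn, rmorphD, rmorph1) /= !(map_polyC (horner_eval x)) (map_polyX (horner_eval x)).
by rewrite !hornerE.
Qed.

Lemma ev_shift (F : {poly {poly algC}}) k n : (size F <= k.+1)%N ->
  ev n (\sum_(i < k.+1) (((F`_i \Po ('X + 1)) * (('X+1)^+2)^+(k - i))%:P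
        * (((('X+1)^+2)%:P * 'X + 1)^+i)))
  = ((n.+1)%:R ^+ 2) ^+ k * ev n.+1 F.
Proof.
move=> hs; rewrite (ev_expand _ _ _ hs) mulr_sumr /ev rmorph_sum horner_sum.
apply: eq_bigr => i _.
rewrite evt.
rewrite !(hornerE, horner_evalE, horner_comp).
rewrite U_S -natr1.
set t := (n%:R + 1 : algC).
have t0 : t != 0 by rewrite /t natr1 pnatr_eq0.
have -> : t ^+ 2 * U n + 1 = t ^+ 2 * (U n + (t ^+ 2)^-1).
  by field.
have hik : (i <= k)%N by rewrite -ltnS.
set j := (k - i)%N; have -> : (t ^+ 2) ^+ k = (t ^+ 2) ^+ j * (t ^+ 2) ^+ i by rewrite -exprD /j subnK.
rewrite exprMn /= [(t ^+ 2 * _) ^+ i]exprMn.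
set u := (U n + _) ^+ i; set v := (t ^+ 2) ^+ i; set w := t ^+ j; set f := (F`_i).[t].
by rewrite -/v -/u; ring.
Qed.

Lemma main_ind (F : {poly {poly algC}}) :
  (forall n, (0 < n)%N -> ev n F = 0) -> F = 0.
Proof.
have [s] := ubnP (size F); elim: s F => // s IH F hs hF.
case: (eqVneq F 0) => // F0; exfalso.
have [k sF] : exists k, size F = k.+1.
  by exists (size F).-1; rewrite prednK // size_poly_gt0.
have Q0 : F`_k != 0.
  by rewrite -[k]/(k.+1.-1) -sF -lead_coefE lead_coef_eq0.
case: k sF Q0 => [|m] sF Q0.
  apply: (negP Q0); apply/eqP; apply: (@vanish_poly _ 1%N) => n hn.
  by have := hF n hn; rewrite (ev_expand _ _ 1%N) ?sF // big_ord1 expr0 mulr1.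
set k := m.+1 in sF Q0 *.
set Q := F`_k in Q0 *.
pose a : {poly algC} := ('X + 1)^+2.
pose c i : {poly algC} := (F`_i \Po ('X + 1)) * a^+(k - i).
pose G : {poly {poly algC}} := \sum_(i < k.+1) (c i)%:P * ((a%:P * 'X + 1)^+ i).
have Gc : forall j, G`_j = \sum_(i < k.+1) c i * (a ^+ j *+ 'C(i, j)).
  by move=> j; rewrite coef_sum; apply: eq_bigr => i _; rewrite coefCM coef_pow.
have evG : forall n, (0 < n)%N -> ev n G = 0.
  by move=> n hn; rewrite /G /c /a ev_shift ?sF // hF ?mulr0.
pose H := (G`_k)%:P * F - Q%:P * G.
have sH : (size H <= k)%N.
  apply/leq_sizeP => j hj; rewrite /H coefB !coefCM.
  case: (ltngtP j k) hj => // [hkj|->] _; last by rewrite /Q mulrC subrr.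
  rewrite [F`_j]nth_default ?sF // mulr0 Gc big1 ?mulr0 ?subrr // => i _.
  by rewrite bin_small ?mulr0n ?mulr0 //; exact: leq_trans (ltn_ord i) hkj.
have H0 : H = 0.
  apply: IH; first by apply: leq_ltn_trans sH _; rewrite -ltnS -sF.
  by move=> n hn; rewrite /H ev_B !ev_CM hF // evG // !mulr0 subrr.
have := congr1 (fun p : {poly {poly algC}} => p`_m) H0.
rewrite /H coefB !coefCM coef0 => /eqP; rewrite subr_eq0 => /eqP e.
have Gk : G`_k = c k * a ^+ k.
  rewrite Gc big_ord_recr /= big1 ?add0r ?binn ?mulr1n // => i _.
  by rewrite bin_small ?mulr0n ?mulr0.
have Gm : G`_m = c m * a ^+ m + c k * (a ^+ m *+ k).
  rewrite Gc big_ord_recr big_ord_recr /= big1 ?add0r ?binn ?binSn ?mulr1n //.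
  by move=> i _; rewrite bin_small ?mulr0n ?mulr0.
rewrite Gk Gm /c subnn subSnn expr0 mulr1 expr1 in e.
apply: (@tele_contra (F`_m) Q k Q0 isT) => y hy.
have := congr1 (horner^~ (y%:R)) e.
rewrite /a !(hornerE, horner_comp, hornerMn).
set T := y%:R + 1.
have T0 : T != 0 by rewrite /T natr1 pnatr_eq0.
set A := T * T.
have Am0 : A ^+ m != 0 by rewrite expf_neq0 // mulf_neq0.
move=> ee; apply: (mulIf Am0).
rewrite /k exprS in ee.
set P0 := (F`_m).[y%:R] in ee *.
set P1 := (F`_m).[T] in ee *.
set Q0' := Q.[y%:R] in ee *.
set Q1 := Q.[T] in ee *.
set Z := A ^+ m in ee *.
rewrite -mulr_natl /= in ee.
rewrite /= /k.
apply: etrans (_ : _ = Q1 * (T ^+ 2 * Z) * P0) _; first by rewrite /A /Z; ring.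
rewrite ee /A /Z; ring.
Qed.

Theorem mainTheorem12 : transcendental_fun U.
Proof.
move=> [k [q [qk hq]]].
pose F : {poly {poly algC}} := \poly_(i < k.+1) q i.
have F0 : F = 0.
  apply: main_ind => n hn; rewrite (ev_expand _ _ k.+1) ?size_poly //.
  by rewrite -[RHS](hq n hn); apply: eq_bigr => i _; rewrite coef_poly ltn_ord.
have : F`_k = q k by rewrite coef_poly ltnSn.
by rewrite F0 coef0 => e; rewrite -e eqxx in qk.
Qed.
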